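(* Let $n\in\mathbb{N}$ and let $A$ be an $n\times n$ acyclic real symmetric matrix with an eigenvalue $\lambda$ of multiplicity one. If $u\in[n]$ is an index with $\phi(A-u,\lambda)\neq 0$, then there exist a unit $\lambda$-eigenvector $\boldsymbol{\beta}$ of $A$ and a $\lambda$-eigenvector $\boldsymbol{\gamma}$ of $A$ such that for every $v\in[n]$ \[ \boldsymbol{\beta}(v)=\begin{cases} \dfrac{W(P_{u,v})\,\phi(A-P_{u,v},\lambda)}{\sqrt{\phi(A-u,\lambda)\,\phi'(A,\lambda)}} & \text{if there is a path from } u \text{ to } v \text{ in } G(A),\\ 0 & \text{otherwise},\end{cases} \qquad\text{and}\qquad |\boldsymbol{\gamma}(v)|=\sqrt{|\phi(A-v,\lambda)|}. \]
   Context: $[n]=\{1,\ldots,n\}$. For a real symmetric $n\times n$ matrix $A$, its graph $G(A)$ has vertex set $[n]$, with $u\neq v$ adjacent iff $A_{uv}\neq 0$; each edge $uv$ has weight $w(uv)=A_{uv}$ and each vertex $v$ has weight $w(v)=A_{vv}$. $A$ is called acyclic if $G(A)$ is a forest. When $u,v$ lie in the same component, $P_{u,v}$ denotes the unique path between them (a single vertex if $u=v$), and $W(P_{u,v})$ is the product of the weights of its edges (equal to $1$ if $u=v$). For an index set $U$, $A-U$ is the matrix obtained from $A$ by deleting the rows and columns indexed by $U$. $\phi(B,x)=\det(x\mathbb{I}-B)$ is the characteristic polynomial (with $\phi$ of the empty matrix equal to $1$), and $\phi'(A,\lambda)$ denotes the derivative of $x\mapsto\phi(A,x)$ evaluated at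 $x=\lambda$. *)

(* Defs.v *)
From HB Require Import structures.
From mathcomp Require Import all_boot all_order all_algebra.
From mathcomp Require Import reals.
Set Implicit Arguments. Unset Strict Implicit. Unset Printing Implicit Defensive.
Import Order.TTheory GRing.Theory Num.Theory.
Local Open Scope ring_scope.

Section AcyclicDefs.
Variables (R : realType) (n : nat).
Implicit Types (A : 'M[R]_n).

Definition adjA A : rel 'I_n := fun u v => (u != v) && (A u v != 0).

Definition is_cycleA A (c : seq 'I_n) : bool :=
  [&& (2 < size c)%N, uniq c & cycle (adjA A) c].

Definition acyclic A : Prop := forall c : seq 'I_n, ~~ is_cycleA A c.

Definition is_pathA A (u v : 'I_n) (s : seq 'I_n) : bool :=
  [&& path (adjA A) u s, last u s == v & uniq (u :: s)].

Definition pathW A (u : 'I_n) (s : seq 'I_n) : R :=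
  \prod_(e <- zip (u :: s) s) A e.1 e.2.

Definition delmx A (U : {set 'I_n}) : 'M[R]_#|~: U| :=
  \matrix_(i, j) A (enum_val i) (enum_val j).

End AcyclicDefs.

Definition phi (R : realType) (m : nat) (B : 'M[R]_m) (x : R) : R :=
  (char_poly B).[x].

Definition dphi (R : realType) (m : nat) (B : 'M[R]_m) (x : R) : R :=
  (char_poly B)^`().[x].

Definition eigvec (R : realType) (n : nat) (A : 'M[R]_n) (lam : R) (x : 'cV[R]_n) :=
  x != 0 /\ A *m x = lam *: x.

Definition unit_vec (R : realType) (n : nat) (x : 'cV[R]_n) :=
  \sum_i (x i 0) ^+ 2 = 1.

(* Main.v *)
Require Import Defs.
From HB Require Import structures.
From mathcomp Require Import all_boot all_order all_algebra.
From mathcomp Require Import reals.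
From mathcomp Require Import perm.
Import Order.TTheory GRing.Theory Num.Theory.
Local Open Scope ring_scope.
Set Implicit Arguments. Unset Strict Implicit. Unset Printing Implicit Defensive.

Section Gen.
Variable T : comNzRingType.

Definition rowrep n (X : 'M[T]_n) u v : 'M[T]_n :=
  \matrix_(i, j) if i == u then (v == j)%:R else X i j.

Definition clr n (X : 'M[T]_n) u : 'M[T]_n :=
  \matrix_(i, j) if (i == u) || (j == u) then (i == j)%:R else X i j.

Lemma det_rowunit n (X Y : 'M[T]_n) u v :
  (forall j, X u j = (v == j)%:R) -> (forall j, Y u j = (v == j)%:R) ->
  (forall i j, i != u -> j != v -> X i j = Y i j) -> \det X = \det Y.
Proof.
move=> HX HY H; rewrite (expand_det_row X u) (expand_det_row Y u).
apply: eq_bigr => j _; rewrite HX HY; case: (eqVneq v j) => [<-|]; last by rewrite !mul0r.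
congr (_ * _); rewrite /cofactor; congr (_ * _); congr (\det _).
apply/matrixP => a b; rewrite !mxE; apply: H; by rewrite eq_sym neq_lift.
Qed.

Lemma det_rowrep n (X : 'M[T]_n) u v : \det (rowrep X u v) = \adj X v u.
Proof.
rewrite (expand_det_row _ u) (bigD1 v) //= big1 ?addr0; last first.
  by move=> j /negPf hj; rewrite mxE eqxx eq_sym hj mul0r.
rewrite mxE !eqxx mul1r [RHS]mxE /cofactor; congr (_ * _); congr (\det _).
apply/matrixP => a b; rewrite !mxE; by rewrite eq_sym (negPf (neq_lift u a)).
Qed.

Lemma det_xrow n (X : 'M[T]_n) i k : i != k -> \det (xrow i k X) = - \det X.
Proof.
move=> hik; rewrite xrowE det_mulmx /tperm_mx det_perm odd_tperm hik.
by rewrite expr1 mulN1r.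
Qed.

Lemma adj_rec n (X : 'M[T]_n) u v : v != u ->
  \adj X v u = - \sum_(i | i != u) X i u * \adj (clr X u) v i.
Proof.
move=> hvu; rewrite -det_rowrep (expand_det_col _ u) (bigD1 u) //=.
rewrite mxE eqxx (negPf hvu) mul0r add0r -sumrN; apply: eq_bigr => i hiu.
rewrite mxE (negPf hiu) -mulrN; congr (_ * _).
have -> : cofactor (rowrep X u v) i u = \det (rowrep (rowrep X u v) i u).
  by rewrite det_rowrep mxE.
rewrite -det_rowrep -(det_xrow _ (i:=u) (k:=i)); last by rewrite eq_sym.
apply: (det_rowunit (u := i) (v := u)).
- by move=> j; rewrite mxE eqxx.
- move=> j; rewrite !mxE tpermR; case: ifP => [/eqP E|_]; first by rewrite E eqxx in hiu.
  by rewrite eqxx.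
move=> a b hai hbu; rewrite !mxE; case: ifP => [/eqP E|_]; first by rewrite E eqxx in hai.
have -> : (b == u) = false by apply/negP => /eqP E; rewrite E eqxx in hbu.
rewrite orbF; case: (eqVneq a u) => [->|hau].
  by rewrite tpermL eqxx.
rewrite tpermD 1?eq_sym //; case: ifP => [/eqP E|_]; first by rewrite E eqxx in hai.
by rewrite (negPf hau).
Qed.

End Gen.
Section Gen2.
Variable T : comNzRingType.

Definition mask n (X : 'M[T]_n) (S : {set 'I_n}) : 'M[T]_n :=
  \matrix_(i, j) if (i \in S) && (j \in S) then X i j else (i == j)%:R.

Lemma det_castmx m n (e : m = n) (B : 'M[T]_m) : \det (castmx (e, e) B) = \det B.
Proof. by case: n / e; rewrite castmx_id. Qed.

Lemma det_conj_perm n (s : 'S_n) (M : 'M[T]_n) :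
  \det (row_perm s (col_perm s M)) = \det M.
Proof.
rewrite row_permE col_permE !det_mulmx !det_perm odd_permV.
by rewrite mulrCA; case: (odd_perm s); rewrite ?expr1 ?expr0 ?mulrN1 ?opprK ?mulr1.
Qed.

Variables (n : nat) (X : 'M[T]_n) (S : {set 'I_n}).

Definition fS (i : 'I_(#|S| + #|~:S|)) : 'I_n :=
  match split i with inl a => enum_val a | inr b => enum_val b end.

Lemma fS_inj : injective fS.
Proof.
move=> i j; rewrite /fS.
case: split_ordP => a ->; case: split_ordP => b -> E.
- by rewrite (enum_val_inj E).
- by have := enum_valP a; have := enum_valP b; rewrite inE E => /negP.
- by move: (enum_valP a); rewrite inE E enum_valP.
- by rewrite (enum_val_inj E).
Qed.

Lemma card_eq : (#|S| + #|~:S| = n)%N.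
Proof. by rewrite cardsC card_ord. Qed.

Definition gS (i : 'I_n) : 'I_n := fS (cast_ord (esym card_eq) i).

Lemma gS_inj : injective gS.
Proof. by move=> i j /fS_inj /cast_ord_inj. Qed.

Definition sS : 'S_n := perm gS_inj.

Definition subm : 'M[T]_#|S| := \matrix_(i, j) X (enum_val i) (enum_val j).

Lemma det_subm : \det subm = \det (mask X S).
Proof.
rewrite -(det_conj_perm sS) -[LHS]mulr1 -(det1 T #|~:S|) -(det_ublock _ (0 : 'M_(#|S|, #|~:S|))).
rewrite -(det_castmx card_eq).
congr (\det _); apply/matrixP => i j; rewrite castmxE.
rewrite (_ : row_perm _ _ i j = mask X S (gS i) (gS j)); last by rewrite !mxE !permE.
rewrite /gS; move: (cast_ord _ i) (cast_ord _ j) => {i j} i j; rewrite /fS.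
case: split_ordP => a ->; case: split_ordP => b ->.
- by rewrite block_mxEul !mxE !enum_valP.
- rewrite block_mxEur !mxE.
  have := enum_valP b; rewrite inE => /negPf ->; rewrite andbF.
  case: eqP => // E; have := enum_valP b; by rewrite inE -E enum_valP.
- rewrite block_mxEdl !mxE.
  have := enum_valP a; rewrite inE => /negPf ->.
  by case: eqP => // E; move: (enum_valP a); rewrite inE E enum_valP.
- rewrite block_mxEdr !mxE.
  have := enum_valP a; rewrite inE => /negPf ->.
  by rewrite (inj_eq enum_val_inj).
Qed.

Lemma clr_mask m (Y : 'M[T]_m) (U : {set 'I_m}) u :
  clr (mask Y U) u = mask Y (U :\ u).
Proof.
apply/matrixP => i j; rewrite !mxE !inE.
by case: (eqVneq i u) => [->|hiu]; case: (eqVneq j u) => [->|hju] //=; rewrite ?andbF.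
Qed.

Lemma adj_mask_diag m (Y : 'M[T]_m) (U : {set 'I_m}) u :
  \adj (mask Y U) u u = \det (mask Y (U :\ u)).
Proof.
rewrite -det_rowrep; apply: (det_rowunit (u := u) (v := u)).
- by move=> j; rewrite mxE eqxx.
- by move=> j; rewrite mxE !inE eqxx.
move=> i j hiu hju; rewrite !mxE !inE (negPf hiu).
by rewrite hju.
Qed.

Lemma adj_mask_rec m (Y : 'M[T]_m) (U : {set 'I_m}) u v : v != u ->
  \adj (mask Y U) v u =
  \sum_(i | i != u) (if (i \in U) && (u \in U) then - Y i u else 0) *
     \adj (mask Y (U :\ u)) v i.
Proof.
move=> hvu; rewrite adj_rec // clr_mask -sumrN; apply: eq_bigr => i hiu.
rewrite mxE -mulNr; congr (_ * _); case: ifP => // _.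
by rewrite (negPf hiu) oppr0.
Qed.

End Gen2.
Section Gen3.
Variable T : comNzRingType.

Lemma deriv_prod n (F : 'I_n -> {poly T}) :
  (\prod_i F i)^`() = \sum_i \prod_j (if j == i then (F j)^`() else F j).
Proof.
elim: n F => [|n IH] F; first by rewrite !big_ord0 -polyC1 derivC.
rewrite big_ord_recl derivM IH big_ord_recl; congr (_ + _).
  by rewrite big_ord_recl eqxx.
rewrite mulr_sumr; apply: eq_bigr => i _; rewrite big_ord_recl.
congr (_ * _); apply: eq_bigr => j _; by rewrite (inj_eq lift_inj).
Qed.

Lemma deriv_det n (Xm : 'M[{poly T}]_n) :
  (\det Xm)^`() = \sum_i \det (\matrix_(a, b) if a == i then (Xm a b)^`() else Xm a b).
Proof.
rewrite /determinant raddf_sum /=.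
rewrite (exchange_big) /=; apply: eq_bigr => s _.
have -> : ((-1) ^+ s * \prod_i Xm i (s i))^`() =
          (-1) ^+ s * (\prod_i Xm i (s i))^`().
  by case: (odd_perm s); rewrite ?expr1 ?expr0 ?mulN1r ?mul1r ?derivN.
rewrite deriv_prod mulr_sumr; apply: eq_bigr => i _; congr (_ * _).
by apply: eq_bigr => j _; rewrite mxE.
Qed.

End Gen3.

Section Real.
Variable R : realType.

Lemma cpm_eval m (B : 'M[R]_m) x :
  map_mx (horner_eval x) (char_poly_mx B) = x%:M - B.
  apply/matrixP => i j; rewrite !mxE horner_evalE hornerD hornerN hornerMn hornerX hornerC. reflexivity. Qed.

Lemma phi_det m (B : 'M[R]_m) x : phi B x = \det (x%:M - B).
Proof. by rewrite /phi /char_poly -horner_evalE -det_map_mx cpm_eval. Qed.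

Lemma dphi_adj m (B : 'M[R]_m) x : dphi B x = \sum_i \adj (x%:M - B) i i.
Proof.
rewrite /dphi /char_poly deriv_det horner_sum; apply: eq_bigr => i _.
rewrite (_ : \matrix_(a, b) _ = rowrep (char_poly_mx B) i i); last first.
  apply/matrixP => a b; rewrite !mxE; case: eqP => // ->.
  by rewrite derivB derivMn derivX derivC subr0 eq_sym.
rewrite det_rowrep -horner_evalE.
have E : horner_eval x (\adj (char_poly_mx B) i i) =
    map_mx (horner_eval x) (\adj (char_poly_mx B)) i i by rewrite [RHS]mxE.
rewrite E.
rewrite map_mx_adj; congr (\adj _ i i); exact: cpm_eval.
Qed.

End Real.

Section Comb.
Variables (R : realType) (n : nat) (A : 'M[R]_n).
Hypothesis Asym : forall i j, A i j = A j i.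
Hypothesis acyc : acyclic A.

Local Notation e := (adjA A).

Lemma adjA_sym x y : e x y = e y x.
Proof. by rewrite /adjA eq_sym Asym. Qed.

Lemma path_rev x b c : path e x (rcons b c) -> path e c (rcons (rev b) x).
Proof.
move=> h; have := rev_path e x (rcons b c).
rewrite last_rcons belast_rcons rev_cons => ->.
by rewrite (eq_path (e' := e)) // => u v; rewrite adjA_sym.
Qed.

Lemma cyc_aux x P Q : path e x P -> path e x Q -> uniq (x :: P) -> uniq (x :: Q) ->
  last x P = last x Q -> P != [::] -> head x P != head x Q -> False.
Proof.
move=> hP hQ uP uQ lPQ nP hd.
have memL : forall S, uniq (x :: S) -> S != [::] -> last x S \in S /\ last x S != x.
  move=> [//|y p] /= /andP[hx _] _; split; first by rewrite mem_last.
  by apply: contraNneq hx => <-; rewrite mem_last.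
have nQ : Q != [::].
  apply/negP => /eqP Qn; move: lPQ; rewrite Qn /= => E.
  by have [_] := memL P uP nP; rewrite E eqxx.
have hasQ : has (mem Q) P.
  apply/hasP; exists (last x P); first by case: (memL P uP nP).
  by rewrite /= lPQ; case: (memL Q uQ nQ).
case/split_find: hasQ hP uP lPQ nP hd => c a rest cQ noa hP uP lPQ nP hd.
case/splitPr: cQ hQ uQ lPQ hd noa => b rest2 hQ uQ lPQ hd noa.
have := acyc (x :: a ++ c :: rev b); apply/negP/negPn; rewrite /is_cycleA; apply/and3P; split.
- rewrite /= size_cat /= size_rev; move: hd.
  case: a {hP uP nP lPQ noa} => [|y a']; case: b {hQ uQ} => [|z b'] //=.
  + by rewrite eqxx.
  + by move=> _; rewrite addSn addnS.
  + by move=> _; rewrite addSn addnS.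
- move: uP uQ noa; rewrite /= !cat_uniq !mem_cat.
  move=> /and4P[hx ua' _ _] /and4P[hxb ub hbc uc] noa.
  move: hx hxb; rewrite mem_rcons !inE negb_or => /andP[/norP[hxc hxa] _] /norP[hxb _].
  move: ua'; rewrite rcons_uniq => /andP[hca ua].
  move: hbc; rewrite /= negb_or => /andP[hcb _].
  apply/and4P; split => //.
  + by rewrite negb_or hxa /= negb_or hxc mem_rev.
  + rewrite negb_or (negbTE hca) /= has_rev has_sym; apply: contra noa.
    by apply: sub_has => y; rewrite /= mem_cat => ->.
  + by rewrite /= mem_rev hcb rev_uniq.
rewrite /= rcons_cat /= -cat_rcons cat_path last_rcons; apply/andP; split.
  by move: hP; rewrite cat_path => /andP[].
apply: path_rev; move: hQ; rewrite cat_path rcons_path /= => /and3P[-> -> _].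
by [].
Qed.


Lemma path_nil u s : is_pathA A u u s -> s = [::].
Proof.
case: s => // w s /and3P[_ /eqP hl /andP[hu _]].
by move: hu; rewrite -[u in u \notin _]hl /= mem_last.
Qed.

Lemma path_self u : is_pathA A u u [::].
Proof. by rewrite /is_pathA /= eqxx. Qed.

Lemma path_cons u v w s : is_pathA A u v (w :: s) ->
  [/\ adjA A u w, is_pathA A w v s & u \notin w :: s].
Proof.
case/and3P => /= /andP[huw hp] hl /andP[hu uws]; split => //.
by rewrite /is_pathA hp hl.
Qed.

Lemma path_consI u v w s : adjA A u w -> is_pathA A w v s -> u \notin w :: s ->
  is_pathA A u v (w :: s).
Proof.
move=> huw /and3P[hp hl us] hu; rewrite /is_pathA /= huw hp hl hu; exact: us.
Qed.

Variable lam : R.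
Local Notation M := (lam%:M - A).

Lemma rec_sum (S : {set 'I_n}) u v : u \in S -> v != u ->
  \adj (mask M S) v u =
  \sum_(i | i != u) (if i \in S then A i u else 0) * \adj (mask M (S :\ u)) v i.
Proof.
move=> uS hvu; rewrite adj_mask_rec //; apply: eq_bigr => i hiu.
rewrite uS andbT; case: ifP => // _; congr (_ * _).
rewrite !mxE; have /negPf -> : i != u by [].
by rewrite mulr0n sub0r opprK.
Qed.

Lemma main k : forall S : {set 'I_n}, #|S| = k -> forall u v, u \in S -> v \in S ->
  (forall s, is_pathA A u v s -> all (mem S) (u :: s) ->
     \adj (mask M S) v u = pathW A u s * \det (mask M (S :\: [set x in u :: s])))
  /\ ((forall s, is_pathA A u v s -> ~~ all (mem S) (u :: s)) ->
      \adj (mask M S) v u = 0).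
Proof.
elim: k => [|k IH] S cS u v uS vS.
  by move: cS; rewrite (cardsD1 u S) uS.
have cS' : #|S :\ u| = k by move: cS; rewrite (cardsD1 u S) uS => [[]].
case: (eqVneq v u) => [->|hvu].
  split.
    move=> s /path_nil -> _; rewrite adj_mask_diag /pathW /= big_nil mul1r.
    by congr (\det (mask M _)); apply/setP => x; rewrite !inE.
  by move=> H; have := H [::] (path_self u); rewrite /= uS.
have vS' : v \in S :\ u by rewrite !inE hvu.
rewrite rec_sum //; split.
  case=> [|w s] hs allS.
    by move: hs => /and3P[_ /eqP E _]; move: hvu; rewrite -E eqxx.
  have [huw hs' hu] := path_cons hs.
  have hwu : w != u by move: huw => /andP[]; rewrite eq_sym.
  have wS' : all (mem (S :\ u)) (w :: s).
    apply/seq.allP => y hy; rewrite !inE; apply/andP; split.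
      by apply: contraNneq hu => <-.
    by move: allS => /seq.allP H; apply: H; rewrite inE hy orbT.
  have wS'' : w \in S :\ u by move: wS' => /= /andP[].
  rewrite (bigD1 w) //= big1 ?addr0.
    have wS : w \in S by move: wS''; rewrite !inE => /andP[].
    rewrite wS ((IH _ cS' w v wS'' vS').1 s hs' wS').
    rewrite /pathW /= big_cons /= mulrA Asym; congr (_ * \det (mask M _)).
    by apply/setP => x; rewrite !inE /=; case: (x == u); case: (x == w); case: (x \in s); case: (x \in S).
  move=> i /andP[hiu hiw]; case: ifP => iS; last by rewrite mul0r.
  case: (eqVneq (A i u) 0) => [->|Aiu]; first by rewrite mul0r.
  have iS' : i \in S :\ u by rewrite !inE hiu.
  rewrite ((IH _ cS' i v iS' vS').2) ?mulr0 // => t ht; apply/negP => allt.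
  apply: (@cyc_aux u (w :: s) (i :: t)).
  - by move: hs => /and3P[].
  - move: ht => /and3P[hp _ _]; rewrite /= hp andbT /adjA Asym Aiu andbT.
    by rewrite eq_sym.
  - by move: hs => /and3P[].
  - move: ht => /and3P[_ _ ui]; rewrite cons_uniq ui andbT.
    apply/negP => /= hin; move: allt => /seq.allP /(_ u hin); rewrite !inE eqxx.
    by [].
  - by move: hs ht => /and3P[_ /eqP hl1 _] /and3P[_ /eqP hl2 _]; rewrite hl1; apply/esym; exact: hl2.
  - by [].
  - by rewrite /= eq_sym.
move=> H; apply: big1 => i hiu; case: ifP => iS; last by rewrite mul0r.
case: (eqVneq (A i u) 0) => [->|Aiu]; first by rewrite mul0r.
have iS' : i \in S :\ u by rewrite !inE hiu.
rewrite ((IH _ cS' i v iS' vS').2) ?mulr0 // => t ht; apply/negP => allt.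
have hu : u \notin i :: t.
  apply/negP => hin; move: allt => /seq.allP /(_ u hin); by rewrite !inE eqxx.
have hui : adjA A u i by rewrite /adjA Asym Aiu andbT eq_sym.
have := H _ (path_consI hui ht hu); rewrite /= uS /=.
move: allt; rewrite /= => /andP[hi ht']; rewrite (sub_all _ ht') ?andbT.
  by move: hi; rewrite !inE => /andP[_ ->].
by move=> y; rewrite /= !inE => /andP[].
Qed.

End Comb.

Section Final.
Variables (R : realType) (n : nat) (A : 'M[R]_n) (lam : R).
Hypothesis hsym : A^T = A.

Lemma Asym i j : A i j = A j i.
Proof. by rewrite -[in LHS]hsym mxE. Qed.

Local Notation M := (lam%:M - A).

Lemma phi_mask (U : {set 'I_n}) : phi (delmx A U) lam = \det (mask M (~: U)).
Proof.
rewrite phi_det -det_subm; congr (\det _); apply/matrixP => i j.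
by rewrite !mxE (inj_eq enum_val_inj).
Qed.

Lemma mask_setT : mask M setT = M.
Proof. by apply/matrixP => i j; rewrite mxE !in_setT. Qed.

Lemma M_sym : M^T = M.
Proof. by rewrite linearB /= tr_scalar_mx hsym. Qed.

Lemma N_sym i j : \adj M i j = \adj M j i.
Proof. by rewrite -[in LHS]M_sym -trmx_adj mxE. Qed.

Lemma N_diag v : \adj M v v = phi (delmx A [set v]) lam.
Proof.
rewrite -{1}mask_setT adj_mask_diag phi_mask; congr (\det (mask M _)).
by apply/setP => x; rewrite !inE andbT.
Qed.

Lemma kernel_zero u (y : 'cV[R]_n) : phi (delmx A [set u]) lam != 0 ->
  M *m y = 0 -> y u 0 = 0 -> y = 0.
Proof.
move=> hp My yu.
set M' := mask M (~: [set u]).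
have uM' : M' \in unitmx by rewrite unitmxE unitfE -phi_mask.
have : M' *m y = 0.
  apply/matrixP => i k; rewrite ord1 !mxE.
  case: (eqVneq i u) => [->|hiu].
    rewrite (bigD1 u) //= big1 ?addr0; first by rewrite yu mulr0.
    move=> j hj; rewrite /M' !mxE !inE eqxx /=.
    have /negPf -> : u != j; first by rewrite eq_sym.
    by rewrite mul0r.
  transitivity ((M *m y) i 0); last by rewrite My mxE.
  rewrite mxE; apply: eq_bigr => j _; rewrite /M' !mxE !inE.
  case: (eqVneq j u) => [->|hju]; first by rewrite yu !mulr0.
  by rewrite hiu.
by move=> h; rewrite -(mulKmx uM' y) h mulmx0.
Qed.


Variable u : 'I_n.
Hypothesis hroot : phi A lam = 0.
Hypothesis hp : phi (delmx A [set u]) lam != 0.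

Local Notation N := (\adj M).
Local Notation p := (phi (delmx A [set u]) lam).

Lemma MN0 : M *m N = 0.
Proof.
rewrite mul_mx_adj -phi_det hroot; apply/matrixP => i j; rewrite !mxE.
by rewrite mul0rn.
Qed.

Lemma Mcol w : M *m col w N = 0.
Proof. by rewrite colE mulmxA MN0 mul0mx. Qed.

Lemma col_prop w i : N i w * p = N u w * N i u.
Proof.
set y := p *: col w N - (N u w) *: col u N.
have My : M *m y = 0 by rewrite mulmxBr -!scalemxAr !Mcol !scaler0 subrr.
have yu : y u 0 = 0.
  by rewrite !mxE -N_diag [N u u]mxE mulrC subrr.
have := kernel_zero hp My yu => /(congr1 (fun B : 'M[R]_(n,1) => B i 0)).
rewrite !mxE => /eqP; rewrite subr_eq0 => /eqP E.
by rewrite mulrC E.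
Qed.

Lemma sum_sq : \sum_i (N i u) ^+ 2 = p * dphi A lam.
Proof.
rewrite dphi_adj mulr_sumr; apply: eq_bigr => i _.
by rewrite mulrC col_prop N_sym expr2.
Qed.

Lemma colsE k i : (k *: col u N) i 0 = k * N i u.
Proof. by rewrite mxE [col _ _ _ _]mxE. Qed.

Lemma eig_col k : k != 0 -> eigvec A lam (k *: col u N).
Proof.
move=> hk; split.
  apply/negP => /eqP /(congr1 (fun B : 'M[R]_(n,1) => B u 0)).
  have cofd : cofactor M u u = p by rewrite -N_diag mxE.
  rewrite !mxE cofd => /eqP; rewrite mulf_eq0 (negPf hk) (negPf hp).
  by [].
have := Mcol u; rewrite mulmxBl mul_scalar_mx => /eqP; rewrite subr_eq0 => /eqP E.
by rewrite -scalemxAr -E !scalerA mulrC.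
Qed.

End Final.

Lemma sqrt_aux (R : realType) (a b : R) : 0 < b ->
  (Num.sqrt b)^-1 * `|a| = Num.sqrt (a ^+ 2 / b).
Proof.
move=> hb; rewrite sqrtrM ?sqr_ge0 // sqrtr_sqr sqrtrV ?(ltW hb) //.
by rewrite mulrC.
Qed.

Unset Implicit Arguments.

Theorem theorem3p3 (R : realType) (n : nat) (A : 'M[R]_n) (lam : R) (u : 'I_n) :
  A^T = A ->
  acyclic A ->
  mup lam (char_poly A) = 1%N ->
  phi (delmx A [set u]) lam != 0 ->
  exists beta gamma : 'cV[R]_n,
    [/\ eigvec A lam beta, unit_vec beta, eigvec A lam gamma &
      forall v : 'I_n,
        [/\ forall s : seq 'I_n, is_pathA A u v s ->
              beta v 0 = pathW A u s * phi (delmx A [set x in u :: s]) lam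
                         / Num.sqrt (phi (delmx A [set u]) lam * dphi A lam),
            (forall s : seq 'I_n, ~~ is_pathA A u v s) -> beta v 0 = 0 &
            `|gamma v 0| = Num.sqrt `|phi (delmx A [set v]) lam| ]].
Proof.
move=> hsym acyc hmup hp.
have hroot : phi A lam = 0.
  apply/eqP; apply/negPn/negP => hr.
  by have := mupNroot (q := char_poly A) (x := lam) hr; rewrite hmup.
have As := Asym hsym.
have sq := sum_sq hsym hroot hp.
have hq : 0 < phi (delmx A [set u]) lam * dphi A lam.
  rewrite -sq (bigD1 u) //= N_diag.
  apply: (@lt_le_trans _ _ (phi (delmx A [set u]) lam ^+ 2)).
    by rewrite lt_neqAle sqr_ge0 andbT eq_sym sqrf_eq0.
  by rewrite lerDl sumr_ge0 // => i _; rewrite sqr_ge0.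
have hpa : 0 < `|phi (delmx A [set u]) lam| by rewrite normr_gt0.
exists ((Num.sqrt (phi (delmx A [set u]) lam * dphi A lam))^-1 *: col u (\adj (lam%:M - A))).
exists ((Num.sqrt `|phi (delmx A [set u]) lam|)^-1 *: col u (\adj (lam%:M - A))).
split.
- by apply: (eig_col hroot hp); rewrite invr_eq0 sqrtr_eq0 -ltNge hq.
- rewrite /unit_vec.
  rewrite (eq_bigr (fun i => (Num.sqrt (phi (delmx A [set u]) lam * dphi A lam)) ^- 2 * \adj (lam%:M - A) i u ^+ 2)); last by move=> i _; rewrite colsE exprMn exprVn.
  rewrite -mulr_sumr sq sqr_sqrtr ?(ltW hq) // mulVf //.
  by rewrite gt_eqF.
- by apply: (eig_col hroot hp); rewrite invr_eq0 sqrtr_eq0 -ltNge hpa.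
move=> v; split.
- move=> s hs; rewrite colsE.
  have allS : all (mem [set: 'I_n]) (u :: s) by apply/seq.allP => y _; exact: in_setT.
  have := (main As acyc lam (erefl #|[set: 'I_n]|) (in_setT u) (in_setT v)).1 s hs allS.
  rewrite mask_setT => ->; rewrite setTD -phi_mask.
  by rewrite mulrC.
- move=> hnone; rewrite colsE.
  have := (main As acyc lam (erefl #|[set: 'I_n]|) (in_setT u) (in_setT v)).2.
  rewrite mask_setT => ->; first by rewrite mulr0.
  by move=> s hs; rewrite (negPf (hnone s)) in hs.
rewrite colsE normrM ger0_norm ?invr_ge0 ?sqrtr_ge0 // -[phi (delmx A [set v]) lam]N_diag.
have E : \adj (lam%:M - A) v v * phi (delmx A [set u]) lam = \adj (lam%:M - A) v u ^+ 2.
  by rewrite (col_prop hroot hp v v) (N_sym lam hsym u v) expr2.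
have -> : `|\adj (lam%:M - A) v v| = \adj (lam%:M - A) v u ^+ 2 / `|phi (delmx A [set u]) lam|.
  by rewrite -[in RHS](ger0_norm (_ : 0 <= \adj (lam%:M - A) v u ^+ 2)) ?sqr_ge0 // -E normrM mulfK // normr_eq0 hp.
have H := sqrt_aux (\adj (lam%:M - A) v u) hpa.
exact: H.
Qed.
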